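(* Let $\mathcal{S}$ be a compact surface without boundary and let $(\mathfrak{u},\mathfrak{l})$ be a labeled unicellular mobile on $\mathcal{S}$. Then: (i) If $A$ and $B$ are two distinct nontrivial arcs of $(\mathfrak{u},\mathfrak{l})$ whose intersection contains internal corners of $A$ or of $B$, then $A\subseteq B$ or $B\subseteq A$, and the level of the larger arc is strictly lower than the level of the smaller arc. (ii) The following three properties are equivalent: (a) for all $i\ge 1$, every nontrivial arc at level $i$ contains a corner with label $i+1$; (b) for all $i\ge 1$, every nontrivial arc at level $i$ has a set of internal corner labels of the form $\{i+1,i+2,\dots,m\}$ for some integer $m$; (c) for all $i\ge 2$ and for every corner with label $i$, either the first subsequent corner with label strictly smaller than $i$ has label $i-1$, or the last preceding corner with label strictly smaller than $i$ has label $i-1$. (iii) If the equivalent properties of (ii) hold, then for all $i\ge 2$, every arc at level $i$ is included in a unique arc at level $i-1$, and this arc is nontrivial; similarly, every corner labeled $i\ge 2$ is included in a unique arc at level $i-1$, and this arc is nontrivial.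
   Context: A map is a cellular embedding of a finite graph (loops and multiple edges allowed) into $\mathcal{S}$, considered up to homeomorphism; it is rooted when given a distinguished oriented corner (a corner is an angular sector between two consecutive half-edges around a vertex in the same face). A labeled unicellular mobile is a pair $(\mathfrak{u},\mathfrak{l})$ where $\mathfrak{u}$ is a rooted map of $\mathcal{S}$ with exactly one face, whose vertex set is partitioned as $V_\bullet(\mathfrak{u})\sqcup V_\circ(\mathfrak{u})$ so that every edge links a vertex of $V_\bullet(\mathfrak{u})$ to a vertex of $V_\circ(\mathfrak{u})$, the root vertex lies in $V_\circ(\mathfrak{u})$, and $\mathfrak{l}:V_\circ(\mathfrak{u})\to\{1,2,3,\dots\}$ is a function with minimum $1$. Since the face is a disk and the root orients it, the corners of $\mathfrak{u}$ are cyclically ordered along the contour of the face; only corners incident to vertices of $V_\circ(\mathfrak{u})$ are considered, in this cyclic order, and the label of a corner is the label of its vertex (''subsequent''/''preceding'' refer to this cyclic order). An arc is a contiguous interval of two or more consecutive such corners whose first and last corners (its extremities) have labels strictly smaller than the labels of all other corners of the interval (its internal corners). An arc whose extremities have labels $i$ and $j$ is an $\{i,j\}$-arc and its level is $\max(i,j)$. An arc is trivial if it has exactly two corners. *)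

(* Defs.v *)
From mathcomp Require Import all_boot.
Set Implicit Arguments. Unset Strict Implicit. Unset Printing Implicit Defensive.

(* A labeled unicellular mobile is abstracted by the cyclic sequence [s] of
   the labels of its corners incident to white vertices (V_circ), listed in
   the cyclic contour order of the unique face, starting from the root corner.
   All notions of the statement (arcs, levels, subsequent/preceding corners)
   only depend on this sequence. *)

(* Corners are indexed by 0 .. size s - 1; a position p : nat denotes the
   corner p %% size s (walking p steps along the contour from the root). *)
Definition lab (s : seq nat) (p : nat) : nat := nth 0 s (p %% size s).

Definition mobile_labels (s : seq nat) : Prop :=
  0 < size s /\ all (fun x => 0 < x) s /\ 1 \in s.

(* An interval of consecutive corners is encoded by (st, k): it consists of
   the k+1 consecutive corners at positions st, st+1, ..., st+k (mod size s),
   with st < size s and 1 <= k <= size s (k = size s: the interval goes once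
   around the face, its two extremities being the same corner). *)
Definition interval (s : seq nat) (a : nat * nat) : Prop :=
  a.1 < size s /\ 0 < a.2 /\ a.2 <= size s.

Definition is_arc (s : seq nat) (a : nat * nat) : Prop :=
  interval s a /\
  forall j, 0 < j -> j < a.2 ->
    lab s a.1 < lab s (a.1 + j) /\ lab s (a.1 + a.2) < lab s (a.1 + j).

Definition trivial_arc (a : nat * nat) : Prop := a.2 = 1.

Definition level (s : seq nat) (a : nat * nat) : nat :=
  maxn (lab s a.1) (lab s (a.1 + a.2)).

Definition corner_in (s : seq nat) (a : nat * nat) (c : nat) : Prop :=
  exists j, j <= a.2 /\ (a.1 + j) %% size s = c.

Definition internal_corner (s : seq nat) (a : nat * nat) (c : nat) : Prop :=
  exists j, 0 < j /\ j < a.2 /\ (a.1 + j) %% size s = c.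

Definition arc_sub (s : seq nat) (a b : nat * nat) : Prop :=
  exists d, d + a.2 <= b.2 /\ a.1 = (b.1 + d) %% size s.

Definition prop_a (s : seq nat) : Prop :=
  forall i, 1 <= i -> forall A, is_arc s A -> ~ trivial_arc A ->
    level s A = i -> exists c, c < size s /\ corner_in s A c /\ lab s c = i.+1.

Definition prop_b (s : seq nat) : Prop :=
  forall i, 1 <= i -> forall A, is_arc s A -> ~ trivial_arc A ->
    level s A = i -> exists m, forall x,
      (exists c, internal_corner s A c /\ lab s c = x) <-> (i.+1 <= x /\ x <= m).

Definition prop_c (s : seq nat) : Prop :=
  forall c, c < size s -> 2 <= lab s c ->
    (exists d, [/\ 0 < d, d <= size s, lab s (c + d) = (lab s c).-1 &
                 forall e, 0 < e -> e < d -> lab s c <= lab s (c + e)])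
    \/
    (exists d, [/\ 0 < d, d <= size s, lab s (c + size s - d) = (lab s c).-1 &
                 forall e, 0 < e -> e < d -> lab s c <= lab s (c + size s - e)]).

(* Main.v *)
Require Import Defs.
From mathcomp Require Import all_boot zify.
Set Implicit Arguments. Unset Strict Implicit. Unset Printing Implicit Defensive.

Ltac clear_mod := repeat match goal with H : context [modn _ _] |- _ => clear H end.
Ltac Lia := clear_mod; lia.

Lemma lab_mod s p q : p %% size s = q %% size s -> lab s p = lab s q.
Proof. by rewrite /lab => ->. Qed.

Lemma lab_modn s p : lab s (p %% size s) = lab s p.
Proof. by apply: lab_mod; rewrite modn_mod. Qed.

Lemma lab_addn s p : lab s (p + size s) = lab s p.
Proof. by apply: lab_mod; rewrite modnDr. Qed.

Lemma mod_shift n p q e : p %% n = q %% n -> (p + e) %% n = (q + e) %% n.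
Proof. by move=> H; rewrite -modnDml H modnDml. Qed.

Lemma lab_shift s p q e : p %% size s = q %% size s -> lab s (p + e) = lab s (q + e).
Proof. by move=> H; apply: lab_mod; apply: mod_shift. Qed.

Lemma mod_cancel n p q f : (p + f) %% n = (q + f) %% n -> p %% n = q %% n.
Proof. by move=> H; apply/eqP; rewrite -(eqn_modDr f) H. Qed.

Lemma back_mod n p c f : p %% n = c %% n -> f <= p -> f <= n ->
  (c + n - f) %% n = (p - f) %% n.
Proof.
move=> H fp fn; apply: (@mod_cancel n (c + n - f) (p - f) f).
rewrite (subnK fp) subnK; last lia.
by rewrite modnDr H.
Qed.

Lemma lab_back s p c f : p %% size s = c %% size s -> f <= p -> f <= size s ->
  lab s (c + size s - f) = lab s (p - f).
Proof. by move=> H fp fn; apply: lab_mod; apply: back_mod. Qed.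

Definition larc s x k := forall j, 0 < j -> j < k ->
  lab s x < lab s (x+j) /\ lab s (x+k) < lab s (x+j).

Lemma arc_larc s a k x : is_arc s (a,k) -> x %% size s = a -> larc s x k.
Proof.
move=> [[/= Ha _] H] Hx j j0 jk.
have E : x %% size s = a %% size s by rewrite Hx modn_small.
rewrite (lab_mod E) (lab_shift j E) (lab_shift k E).
exact: H.
Qed.

Lemma larc_arc s x k : 0 < k -> k <= size s -> larc s x k -> is_arc s (x %% size s, k).
Proof.
move=> k0 kn H; have n0 : 0 < size s by lia.
split; first by split=> //=; rewrite ltn_pmod.
move=> j j0 jk /=.
have E : x %% size s %% size s = x %% size s by rewrite modn_mod.
rewrite (lab_mod E) (lab_shift j E) (lab_shift k E); exact: H.
Qed.

Lemma cross s x ka y kb P : larc s x ka -> larc s y kb -> x < P -> P < x + ka ->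
  y <= P -> P <= y + kb -> 0 < kb ->
  (x <= y /\ y + kb <= x + ka) \/ (y <= x /\ x + ka <= y + kb).
Proof.
move=> HA HB h1 h2 h3 h4 kb0.
case: (leqP x y) => xy.
- case: (leqP (y+kb) (x+ka)) => e; first by left.
  case: (ltnP x y) => xy'.
  + have [_ H1] := HA (y - x) ltac:(lia) ltac:(lia).
    have [H2 _] := HB (x + ka - y) ltac:(lia) ltac:(lia).
    rewrite subnKC in H1; last lia.
    rewrite subnKC in H2; last lia. lia.
  + right; lia.
- case: (leqP (x+ka) (y+kb)) => e; first by right; lia.
  have [H1 _] := HA (y + kb - x) ltac:(lia) ltac:(lia).
  have [_ H2] := HB (x - y) ltac:(lia) ltac:(lia).
  rewrite subnKC in H1; last lia.
  rewrite subnKC in H2; last lia. lia.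
Qed.

Lemma sub_level s x ka y kb : larc s x ka -> 0 < kb ->
  x <= y -> y + kb <= x + ka -> (x, ka) <> (y, kb) ->
  maxn (lab s x) (lab s (x+ka)) < maxn (lab s y) (lab s (y+kb)).
Proof.
move=> HA kb0 e1 e2 ne.
case: (ltnP x y) => xy.
- have [H1 H2] := HA (y - x) ltac:(lia) ltac:(lia).
  rewrite subnKC in H1 H2; last lia. lia.
- have exy : y = x by lia. subst y.
  have [kbka|kbka] : kb < ka \/ kb = ka by lia.
  2: by case: ne; rewrite kbka.
  have [H1 H2] := HA kb ltac:(lia) ltac:(lia). lia.
Qed.

Lemma first_uniq (g : nat -> nat) t d1 d2 : 0 < d1 -> 0 < d2 -> g d1 < t -> g d2 < t ->
  (forall e, 0 < e -> e < d1 -> t <= g e) -> (forall e, 0 < e -> e < d2 -> t <= g e) -> d1 = d2.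
Proof.
move=> ? ? h1 h2 m1 m2; case: (ltngtP d1 d2) => // H.
- by have := m2 d1 ltac:(lia) H; lia.
- by have := m1 d2 ltac:(lia) H; lia.
Qed.


Lemma level_line s a k x : x %% size s = a %% size s ->
  level s (a, k) = maxn (lab s x) (lab s (x + k)).
Proof. by move=> E; rewrite /level /= (lab_mod E) (lab_shift k E). Qed.

Lemma part_i_core s A B c : is_arc s A -> is_arc s B -> A <> B ->
  internal_corner s A c -> corner_in s B c ->
  (arc_sub s A B /\ level s B < level s A) \/ (arc_sub s B A /\ level s A < level s B).
Proof.
case: A => a ka; case: B => b kb => HA HB ne [j [j0 [/= jk Ej]]] [m [/= mk Em]].
have HA' := HA; have HB' := HB.
case: HA' => [[/= an [ka0 kan]] _]; case: HB' => [[/= bn [kb0 kbn]] _].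
set n := size s in an kan bn kbn Ej Em *.
have n0 : 0 < n by lia.
set P := c + n.
have cn : c < n by rewrite -Ej ltn_pmod.
have Ex : (P - j) %% n = a.
  rewrite -(modn_small an); apply: (@mod_cancel n _ _ j).
  by rewrite subnK; [rewrite /P modnDr Ej modn_small | rewrite /P; lia].
have Ey : (P - m) %% n = b.
  rewrite -(modn_small bn); apply: (@mod_cancel n _ _ m).
  by rewrite subnK; [rewrite /P modnDr Em modn_small | rewrite /P; lia].
have LA := arc_larc HA Ex; have LB := arc_larc HB Ey.
have Exa : (P - j) %% n = a %% n by rewrite Ex modn_small.
have Eyb : (P - m) %% n = b %% n by rewrite Ey modn_small.
rewrite (level_line ka Exa) (level_line kb Eyb).
have neq : (P - j, ka) <> (P - m, kb).
  by case=> e1 e2; apply: ne; rewrite -Ex -Ey e1 e2.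
have c1 : P - j < P by rewrite /P; clear -j0 jk kan mk kbn; lia.
have c2 : P < P - j + ka by rewrite /P; clear -j0 jk kan mk kbn; lia.
have c3 : P - m <= P by rewrite /P; clear -j0 jk kan mk kbn; lia.
have c4 : P <= P - m + kb by rewrite /P; clear -j0 jk kan mk kbn; lia.
have [[h1 h2]|[h1 h2]] := cross LA LB c1 c2 c3 c4 kb0.
- right; split; last exact: (sub_level LA kb0 h1 h2 neq).
  exists (P - m - (P - j)); split; first by clear -h1 h2; rewrite /=; lia.
  by rewrite /= -{1}Ey -{1}(subnKC h1) -(modnDml (P - j)) Ex.
- have neq' : (P - m, kb) <> (P - j, ka) by move=> [e1 e2]; apply: neq; rewrite e1 e2.
  left; split; last exact: (sub_level LB ka0 h1 h2 neq').
  exists (P - j - (P - m)); split; first by clear -h1 h2; rewrite /=; lia.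
  by rewrite /= -{1}Ex -{1}(subnKC h1) -(modnDml (P - m)) Ey.
Qed.


Lemma lab_small s q : q < size s -> lab s q = nth 0 s q.
Proof. by move=> h; rewrite /lab modn_small. Qed.

Lemma lab_pos s p : mobile_labels s -> 0 < lab s p.
Proof.
move=> [n0 [/allP Hall _]]; rewrite /lab.
by apply: Hall; apply: mem_nth; rewrite ltn_pmod.
Qed.

Lemma exists_low s : mobile_labels s -> exists q, q < size s /\ lab s q = 1.
Proof.
move=> [_ [_ H1]]; exists (index 1 s); split; first by rewrite index_mem.
by rewrite lab_small ?index_mem // nth_index.
Qed.

Lemma right_first s c t : 0 < size s -> c < size s ->
  (exists q, q < size s /\ lab s q < t) ->
  exists d, [/\ 0 < d, d <= size s, lab s (c + d) < t &
             forall e, 0 < e -> e < d -> t <= lab s (c + e)].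
Proof.
move=> n0 cn [q [qn Hq]].
have ex : exists d, [&& 0 < d, d <= size s & lab s (c + d) < t].
  case: (ltnP c q) => cq.
  - exists (q - c); apply/and3P; split; try (clear Hq; lia).
    by rewrite subnKC // ltnW.
  - exists (q + size s - c); apply/and3P; split; try (clear Hq; lia).
    have -> : c + (q + size s - c) = q + size s by clear Hq; lia.
    by rewrite lab_addn.
case: (ex_minnP ex) => d /and3P [d0 dn Hd] Hmin.
exists d; split => // e e0 ed; rewrite leqNgt; apply/negP => He.
have := Hmin e; rewrite e0 He /= => /(_ ltac:(clear Hd He Hmin; lia)); clear Hd He Hmin; lia.
Qed.

Lemma left_first s c t : 0 < size s -> c < size s ->
  (exists q, q < size s /\ lab s q < t) ->
  exists d, [/\ 0 < d, d <= size s, lab s (c + size s - d) < t &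
             forall e, 0 < e -> e < d -> t <= lab s (c + size s - e)].
Proof.
move=> n0 cn [q [qn Hq]].
have ex : exists d, [&& 0 < d, d <= size s & lab s (c + size s - d) < t].
  case: (ltnP q c) => cq.
  - exists (c - q); apply/and3P; split; try (clear Hq; lia).
    have -> : c + size s - (c - q) = q + size s by clear Hq; lia.
    by rewrite lab_addn.
  - exists (c + size s - q); apply/and3P; split; try (clear Hq; lia).
    have -> : c + size s - (c + size s - q) = q by clear Hq; lia.
    done.
case: (ex_minnP ex) => d /and3P [d0 dn Hd] Hmin.
exists d; split => // e e0 ed; rewrite leqNgt; apply/negP => He.
have := Hmin e; rewrite e0 He /= => /(_ ltac:(clear Hd He Hmin; lia)); clear Hd He Hmin; lia.
Qed.



Definition brk s c dl dr :=
 [/\ 0 < dl, 0 < dr, dl + dr <= size s, lab s (c + size s - dl) < lab s c & lab s (c + dr) < lab s c]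
 /\ (forall e, 0 < e -> e < dl -> lab s c <= lab s (c + size s - e))
 /\ (forall e, 0 < e -> e < dr -> lab s c <= lab s (c + e)).

Lemma bracket s c : mobile_labels s -> c < size s -> 2 <= lab s c ->
  exists dl dr, brk s c dl dr.
Proof.
move=> Hs cn c2; have n0 : 0 < size s by case: Hs.
have low : exists q, q < size s /\ lab s q < lab s c.
  by have [q [qn q1]] := exists_low Hs; exists q; rewrite q1.
have [dr [dr0 drn Hdr Mdr]] := right_first n0 cn low.
have [dl [dl0 dln Hdl Mdl]] := left_first n0 cn low.
exists dl, dr; split; last by split.
split => //; rewrite leqNgt; apply/negP => big.
case: (ltnP dl (size s)) => dlv.
- have := Mdr (size s - dl) ltac:(Lia) ltac:(Lia).
  rewrite addnBA; last Lia. Lia.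
- have E : dl = size s by Lia. subst dl.
  move: Hdl; rewrite addnK; Lia.
Qed.

Lemma brk_inner s c dl dr : brk s c dl dr ->
  forall j, 0 < j -> j < dl + dr -> lab s c <= lab s (c + size s - dl + j).
Proof.
move=> [[dl0 dr0 dn Hl Hr] [Ml Mr]] j j0 jd.
case: (ltngtP j dl) => jdl.
- have -> : c + size s - dl + j = c + size s - (dl - j) by Lia.
  apply: Ml; Lia.
- have -> : c + size s - dl + j = c + (j - dl) + size s by Lia.
  rewrite lab_addn; apply: Mr; Lia.
- have -> : c + size s - dl + j = c + size s by Lia.
  by rewrite lab_addn.
Qed.

Lemma brk_larc s c dl dr : brk s c dl dr -> larc s (c + size s - dl) (dl + dr).
Proof.
move=> H j j0 jd; have := brk_inner H j0 jd.
case: H => [[dl0 dr0 dn Hl Hr] _].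
have -> : c + size s - dl + (dl + dr) = c + dr + size s by Lia.
rewrite lab_addn; Lia.
Qed.

Lemma brk_arc s c dl dr : c < size s -> brk s c dl dr ->
  [/\ is_arc s ((c + size s - dl) %% size s, dl + dr),
      internal_corner s ((c + size s - dl) %% size s, dl + dr) c,
      corner_in s ((c + size s - dl) %% size s, dl + dr) c,
      ~ trivial_arc ((c + size s - dl) %% size s, dl + dr) &
      level s ((c + size s - dl) %% size s, dl + dr) =
        maxn (lab s (c + size s - dl)) (lab s (c + dr))].
Proof.
move=> cn H; have L := brk_larc H.
case: H => [[dl0 dr0 dn Hl Hr] _].
have E : c + size s - dl + dl = c + size s by Lia.
have Ec : ((c + size s - dl) %% size s + dl) %% size s = c.
  by rewrite modnDml E modnDr modn_small.
split.
- by apply: larc_arc => //; Lia.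
- by exists dl => /=; split; [Lia | split; [Lia | exact Ec]].
- by exists dl => /=; split; [Lia | exact Ec].
- by rewrite /trivial_arc /=; Lia.
- rewrite (@level_line s _ _ (c + size s - dl)); last by rewrite modn_mod.
  have -> : c + size s - dl + (dl + dr) = c + dr + size s by Lia.
  by rewrite lab_addn.
Qed.

Lemma brk_uniq s c dl dr B : c < size s -> brk s c dl dr -> is_arc s B ->
  (level s B).+1 = lab s c -> corner_in s B c ->
  B = ((c + size s - dl) %% size s, dl + dr).
Proof.
case: B => b k cn H HB lv [e [/= ek Ee]].
have HB' := HB; case: HB' => [[/= bn [k0 kn]] _].
have Hx : (b + size s) %% size s = b by rewrite modnDr modn_small.
have L := arc_larc HB Hx.
have Ex : (b + size s) %% size s = b %% size s by rewrite Hx modn_small.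
move: lv; rewrite (level_line k Ex) => lv.
have Ep : (b + size s + e) %% size s = c %% size s.
  by rewrite -modnDml Hx Ee modn_small.
have e0 : 0 < e.
  rewrite lt0n; apply/negP => /eqP e0; subst e.
  move: Ee; rewrite addn0 => Ee.
  have : lab s c = lab s (b + size s) by rewrite -Ee lab_modn lab_addn.
  Lia.
have ek' : e < k.
  rewrite ltn_neqAle ek andbT; apply/negP => /eqP ee; subst e.
  have : lab s c = lab s (b + size s + k).
    by rewrite -Ee lab_modn addnAC lab_addn.
  Lia.
case: H => [[dl0 dr0 dn Hl Hr] [Ml Mr]].
have R : k - e = dr.
  apply: (@first_uniq (fun f => lab s (c + f)) (lab s c) (k - e) dr) => /=.
  - Lia.
  - exact dr0.
  - rewrite -(lab_shift (k - e) Ep) -addnA subnKC //; Lia.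
  - exact Hr.
  - move=> f f0 fk; rewrite -(lab_shift f Ep) -addnA.
    have [h1 h2] := L (e + f) ltac:(Lia) ltac:(Lia). Lia.
  - exact Mr.
have Le : e = dl.
  apply: (@first_uniq (fun f => lab s (c + size s - f)) (lab s c) e dl) => /=.
  - Lia.
  - exact dl0.
  - rewrite (lab_back Ep); try Lia.
    rewrite addnK; Lia.
  - exact Hl.
  - move=> f f0 fe; rewrite (lab_back Ep); try Lia.
    have -> : b + size s + e - f = b + size s + (e - f) by Lia.
    have [h1 h2] := L (e - f) ltac:(Lia) ltac:(Lia). Lia.
  - exact Ml.
subst dl; congr (_, _); last Lia.
rewrite (back_mod Ep); try Lia.
by rewrite addnK Hx.
Qed.



Lemma b_to_a s : prop_b s -> prop_a s.
Proof.
move=> Hb i i1 [a k] HA nt lv.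
have [m Hm] := Hb i i1 (a,k) HA nt lv.
have HA' := HA; case: HA' => [[/= an [k0 kn]] Hin].
have k2 : 1 < k by rewrite /trivial_arc /= in nt; Lia.
have h1 : exists c, internal_corner s (a,k) c /\ lab s c = lab s (a+1).
  exists ((a+1) %% size s); split; last by rewrite lab_modn.
  by exists 1; split => //=.
have [h2 h3] := (Hm (lab s (a+1))).1 h1.
have [c [[j [j0 [/= jk Ej]]] Hc]] := (Hm i.+1).2 (conj (leqnn _) (leq_trans h2 h3)).
exists c; split; first by rewrite -Ej ltn_pmod //; Lia.
split=> //; exists j; split => //=; Lia.
Qed.

Lemma c_to_a s : mobile_labels s -> prop_c s -> prop_a s.
Proof.
move=> Hs Hc i i1 [a k] HA nt lv.
have HA' := HA; case: HA' => [[/= an [k0 kn]] Hin].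
have n0 : 0 < size s by Lia.
have k2 : 1 < k by rewrite /trivial_arc /= in nt; Lia.
rewrite /level /= in lv.
have Q : forall v j, 0 < j -> j < k -> lab s (a + j) = v ->
    exists j', [/\ 0 < j', j' < k & lab s (a + j') = i.+1].
  elim=> [|v IH] j j0 jk Hv.
  - have [h _] := Hin j j0 jk; Lia.
  - have [h h'] := Hin j j0 jk.
    case: (ltngtP v.+1 i.+1) => vi.
    + Lia.
    + set c := (a + j) %% size s.
      have cn : c < size s by rewrite ltn_pmod.
      have Ec : (a + j) %% size s = c %% size s by rewrite modn_mod.
      have Lc : lab s c = v.+1 by rewrite lab_modn.
      have [[d [d0 dn Hd Md]]|[d [d0 dn Hd Md]]] := Hc c cn ltac:(rewrite Lc; Lia).
      * rewrite Lc /= -(lab_shift d Ec) in Hd.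
        have jdk : j + d < k.
          case: (ltngtP (j + d) k) => // jd.
          -- have := Md (k - j) ltac:(Lia) ltac:(Lia).
             rewrite Lc -(lab_shift (k - j) Ec) -addnA subnKC; last Lia. Lia.
          -- move: Hd; rewrite -addnA jd; Lia.
        apply: (IH (j + d)) => //; [Lia | by rewrite addnA].
      * have Ec' : (a + j + size s) %% size s = c %% size s by rewrite modnDr.
        rewrite Lc /= (lab_back Ec') in Hd; try Lia.
        have djk : d < j.
          case: (ltngtP d j) => // jd.
          -- have := Md j ltac:(Lia) jd.
             rewrite Lc (lab_back Ec'); try Lia.
             have -> : a + j + size s - j = a + size s by Lia.
             rewrite lab_addn; Lia.
          -- move: Hd; rewrite jd.
             have -> : a + j + size s - j = a + size s by Lia.
             rewrite lab_addn; Lia.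
        apply: (IH (j - d)); [Lia | Lia |].
        rewrite -lab_addn.
        have -> : a + (j - d) + size s = a + j + size s - d by Lia.
        exact Hd.
    + exists j; split => //; Lia.
have [j' [j0 jk Hj]] := Q _ 1 ltac:(done) k2 (erefl _).
exists ((a + j') %% size s); split; first by rewrite ltn_pmod.
split; last by rewrite lab_modn.
exists j'; split => //=; Lia.
Qed.



Lemma line_inner s q dl dr : dl <= q ->
  (forall e, 0 < e -> e < dl -> lab s q <= lab s (q - e)) ->
  (forall e, 0 < e -> e < dr -> lab s q <= lab s (q + e)) ->
  forall j, 0 < j -> j < dl + dr -> lab s q <= lab s (q - dl + j).
Proof.
move=> dq Ml Mr j j0 jd.
case: (ltngtP j dl) => jdl.
- have -> : q - dl + j = q - (dl - j) by Lia.
  apply: Ml; Lia.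
- have -> : q - dl + j = q + (j - dl) by Lia.
  apply: Mr; Lia.
- by have -> : q - dl + j = q by Lia.
Qed.

Lemma b_to_c s : mobile_labels s -> prop_b s -> prop_c s.
Proof.
move=> Hs Hb c cn c2.
have [dl [dr H]] := bracket Hs cn c2.
have [HB Hint Hcorn Hnt Hlv] := brk_arc cn H.
have Hinner := brk_inner H.
case: H => [[dl0 dr0 dn Hl Hr] [Ml Mr]].
set L := maxn (lab s (c + size s - dl)) (lab s (c + dr)) in Hlv.
have L1 : 1 <= L by have := lab_pos (c + dr) Hs; rewrite /L; Lia.
have [m Hm] := Hb L L1 _ HB Hnt Hlv.
have [h1 h2] := (Hm (lab s c)).1 (ex_intro _ c (conj Hint (erefl _))).
have [c' [[j [j0 [/= jk Ej]]] Hc']] := (Hm L.+1).2 (conj (leqnn _) (leq_trans h1 h2)).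
have E' : lab s c' = lab s (c + size s - dl + j).
  by rewrite -Ej lab_modn; apply: lab_shift; rewrite modn_mod.
have := Hinner j j0 jk; rewrite -E' Hc' => h3.
have LL : L.+1 = lab s c by Lia.
rewrite /L in LL.
have [e|e] : lab s (c + dr) = (lab s c).-1 \/ lab s (c + size s - dl) = (lab s c).-1 by Lia.
- by left; exists dr; split => //; Lia.
- by right; exists dl; split => //; Lia.
Qed.

Lemma a_step s a k j : mobile_labels s -> prop_a s -> is_arc s (a,k) -> 0 < j -> j < k ->
  (level s (a,k)).+2 <= lab s (a + j) ->
  exists j', [/\ 0 < j', j' < k & lab s (a + j') = (lab s (a + j)).-1].
Proof.
move=> Hs Ha HA j0 jk lv.
have HA' := HA; case: HA' => [[/= an [k0 kn]] Hin].
rewrite /level /= in lv.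
set x := lab s (a + j) in lv *.
have exr : exists d, [&& 0 < d, d <= k - j & lab s (a + j + d) < x].
  exists (k - j); apply/and3P; split; try Lia.
  rewrite -addnA subnKC; last Lia. Lia.
case: (ex_minnP exr) => dr /and3P [dr0 drk Hdr] Mr0.
have Mr : forall e, 0 < e -> e < dr -> x <= lab s (a + j + e).
  move=> e e0 ed; rewrite leqNgt; apply/negP => He.
  have := Mr0 e; rewrite e0 He /= => /(_ ltac:(Lia)); Lia.
have exl : exists d, [&& 0 < d, d <= j & lab s (a + j - d) < x].
  exists j; apply/and3P; split; try Lia.
  rewrite addnK; Lia.
case: (ex_minnP exl) => dl /and3P [dl0 dlj Hdl] Ml0.
have Ml : forall e, 0 < e -> e < dl -> x <= lab s (a + j - e).
  move=> e e0 ed; rewrite leqNgt; apply/negP => He.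
  have := Ml0 e; rewrite e0 He /= => /(_ ltac:(Lia)); Lia.
have dq : dl <= (a + j) by Lia.
have Hinner := line_inner dq Ml Mr.
have Lq : larc s ((a + j) - dl) (dl + dr).
  move=> t t0 td; have := Hinner t t0 td.
  have -> : (a + j) - dl + (dl + dr) = (a + j) + dr by Lia.
  rewrite /x in Hdl Hdr; Lia.
have HB := @larc_arc s ((a + j) - dl) (dl + dr) ltac:(Lia) ltac:(Lia) Lq.
have nt : ~ trivial_arc (((a + j) - dl) %% size s, dl + dr) by rewrite /trivial_arc /=; Lia.
have Elv : level s (((a + j) - dl) %% size s, dl + dr) = maxn (lab s ((a + j) - dl)) (lab s ((a + j) + dr)).
  rewrite (@level_line s _ _ ((a + j) - dl)); last by rewrite modn_mod.
  by have -> : (a + j) - dl + (dl + dr) = (a + j) + dr by Lia.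
set L := maxn (lab s ((a + j) - dl)) (lab s ((a + j) + dr)) in Elv.
have L1 : 1 <= L by have := lab_pos ((a + j) + dr) Hs; rewrite /L; Lia.
have [c' [c'n [[e [/= ed Ee]] Hc']]] := Ha L L1 _ HB nt Elv.
have E' : lab s c' = lab s ((a + j) - dl + e).
  by rewrite -Ee lab_modn; apply: lab_shift; rewrite modn_mod.
rewrite E' in Hc'.
have xL : x = L.+1.
  case: (posnP e) => e0.
  - move: Hc'; rewrite e0 addn0 /L; Lia.
  case: (ltngtP e (dl + dr)) => ee.
  - have := Hinner e e0 ee; rewrite /L in Hc' *; rewrite /x in Hdl Hdr *; Lia.
  - Lia.
  - move: Hc'; rewrite ee.
    have -> : (a + j) - dl + (dl + dr) = (a + j) + dr by Lia.
    rewrite /L; Lia.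
have [e1|e1] : lab s ((a + j) - dl) = L \/ lab s ((a + j) + dr) = L by rewrite /L; Lia.
- have dlj' : dl < j.
    rewrite ltn_neqAle dlj andbT; apply/negP => /eqP E; move: e1.
    rewrite E addnK; rewrite /x in xL; Lia.
  exists (j - dl); split; [Lia | Lia |].
  have -> : a + (j - dl) = (a + j) - dl by Lia.
  rewrite e1 -/x xL; done.
- have drj : dr < k - j.
    rewrite ltn_neqAle drk andbT; apply/negP => /eqP E; move: e1.
    rewrite E -addnA subnKC; last Lia.
    rewrite /x in xL; Lia.
  exists (j + dr); split; [Lia | Lia |].
  rewrite addnA e1 -/x xL; done.
Qed.



Lemma a_to_b s : mobile_labels s -> prop_a s -> prop_b s.
Proof.
move=> Hs Ha i i1 [a k] HA nt lv.
have HA' := HA; case: HA' => [[/= an [k0 kn]] Hin].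
have k2 : 1 < k by rewrite /trivial_arc /= in nt; Lia.
have lv' := lv; rewrite /level /= in lv'.
pose F := fun t : 'I_k => lab s (a + t).
exists (\max_t F t).
have Pint : forall x, (exists c, internal_corner s (a,k) c /\ lab s c = x) <->
     (exists j, [/\ 0 < j, j < k & lab s (a + j) = x]).
  move=> x; split.
  - move=> [c [[j [j0 [/= jk Ej]]] Hc]]; exists j; split => //.
    by rewrite -Hc -Ej lab_modn.
  - move=> [j [j0 jk Hj]]; exists ((a + j) %% size s); split; last by rewrite lab_modn.
    by exists j.
move=> x; rewrite Pint; split.
- move=> [j [j0 jk Hj]]; split.
  + have [h1 h2] := Hin j j0 jk; Lia.
  + by rewrite -Hj; apply: (@leq_bigmax _ F (Ordinal jk)).
- have [t0 Et0] := @eq_bigmax _ F ltac:(rewrite card_ord; Lia).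
  have t00 : 0 < t0.
    rewrite lt0n; apply/negP => /eqP t0e.
    have := @leq_bigmax _ F (Ordinal k2); rewrite Et0 /F t0e /= addn0.
    have [h1 _] := Hin 1 ltac:(done) k2; Lia.
  have Pm : exists j, [/\ 0 < j, j < k & lab s (a + j) = \max_t F t].
    by exists t0; split => //; rewrite Et0.
  set m := \max_t F t in Pm *.
  have D : forall y, i.+1 <= m - y -> exists j, [/\ 0 < j, j < k & lab s (a + j) = m - y].
    elim=> [|y IH] hy; first by rewrite subn0.
    have [j [j0 jk Hj]] := IH ltac:(Lia).
    have [j' [j'0 j'k Hj']] := a_step Hs Ha HA j0 jk ltac:(rewrite Hj lv; Lia).
    exists j'; split => //; rewrite Hj' Hj; Lia.
  move=> [x1 x2].
  have := D (m - x) ltac:(Lia).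
  by have -> : m - (m - x) = x by Lia.
Qed.



Lemma corner_part s c : mobile_labels s -> prop_c s -> c < size s -> 2 <= lab s c ->
  exists dl dr, brk s c dl dr /\
    level s ((c + size s - dl) %% size s, dl + dr) = (lab s c).-1.
Proof.
move=> Hs Hc cn c2.
have [dl [dr H]] := bracket Hs cn c2.
exists dl, dr; split => //.
have [_ _ _ _ ->] := brk_arc cn H.
case: H => [[dl0 dr0 dn Hl Hr] [Ml Mr]].
have [[d [d0 dn' Hd Md]]|[d [d0 dn' Hd Md]]] := Hc c cn c2.
- have E : d = dr.
    apply: (@first_uniq (fun f => lab s (c + f)) (lab s c) d dr) => //=.
    rewrite Hd; Lia.
  subst d; Lia.
- have E : d = dl.
    apply: (@first_uniq (fun f => lab s (c + size s - f)) (lab s c) d dl) => //=.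
    rewrite Hd; Lia.
  subst d; Lia.
Qed.

Lemma corner_iii s c : mobile_labels s -> prop_c s -> c < size s -> 2 <= lab s c ->
  exists dl dr, brk s c dl dr /\
   [/\ is_arc s ((c + size s - dl) %% size s, dl + dr),
       level s ((c + size s - dl) %% size s, dl + dr) = (lab s c).-1,
       corner_in s ((c + size s - dl) %% size s, dl + dr) c,
       ~ trivial_arc ((c + size s - dl) %% size s, dl + dr) &
       forall B', is_arc s B' -> level s B' = (lab s c).-1 ->
         corner_in s B' c -> B' = ((c + size s - dl) %% size s, dl + dr)].
Proof.
move=> Hs Hc cn c2.
have [dl [dr [H Hlv]]] := corner_part Hs Hc cn c2.
exists dl, dr; split => //.
have [HB _ Hcorn Hnt _] := brk_arc cn H.
split => // B' HB' lv' Hc'.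
apply: (brk_uniq cn H HB' _ Hc'); rewrite lv'; Lia.
Qed.

Lemma part_iii s : mobile_labels s -> prop_c s ->
   forall i, 2 <= i ->
     (forall A, is_arc s A -> level s A = i ->
        exists B, [/\ is_arc s B, level s B = i.-1, arc_sub s A B,
                      ~ trivial_arc B &
                      forall B', is_arc s B' -> level s B' = i.-1 ->
                                 arc_sub s A B' -> B' = B])
     /\
     (forall c, c < size s -> lab s c = i ->
        exists B, [/\ is_arc s B, level s B = i.-1, corner_in s B c,
                      ~ trivial_arc B &
                      forall B', is_arc s B' -> level s B' = i.-1 ->
                                 corner_in s B' c -> B' = B]).
Proof.
move=> Hs Hc i i2; split; last first.
  move=> c cn ci.
  have [dl [dr [_ [HB Hlv Hcorn Hnt Hu]]]] := corner_iii Hs Hc cn ltac:(rewrite ci; done).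
  by exists ((c + size s - dl) %% size s, dl + dr); rewrite -ci; split.
case=> a k HA lv.
have HA' := HA; case: HA' => [[/= an [k0 kn]] Hin].
have n0 : 0 < size s by Lia.
have lv' := lv; rewrite /level /= in lv'.
have [la|la] : lab s a = i \/ lab s (a + k) = i by Lia.
- have [dl [dr [H [HB Hlv Hcorn Hnt Hu]]]] := corner_iii Hs Hc an ltac:(rewrite la; done).
  rewrite la in Hlv Hu.
  exists ((a + size s - dl) %% size s, dl + dr); split => //.
  + case: H => [[dl0 dr0 dn Hl Hr] _].
    exists dl => /=; split.
    * rewrite leq_add2l leqNgt; apply/negP => drk.
      have [h1 _] := Hin dr dr0 drk; Lia.
    * rewrite modnDml subnK; last Lia.
      by rewrite modnDr modn_small.
  + move=> B' HB' lvB' [d [/= dk Ed]].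
    apply: Hu => //; exists d; split; [Lia | by rewrite -Ed].
- set c := (a + k) %% size s.
  have cn : c < size s by rewrite ltn_pmod.
  have Ec : (a + k) %% size s = c %% size s by rewrite modn_mod.
  have Lc : lab s c = i by rewrite lab_modn.
  have [dl [dr [H [HB Hlv Hcorn Hnt Hu]]]] := corner_iii Hs Hc cn ltac:(rewrite Lc; done).
  rewrite Lc in Hlv Hu.
  exists ((c + size s - dl) %% size s, dl + dr); split => //.
  + case: H => [[dl0 dr0 dn Hl Hr] _].
    have kdl : k <= dl.
      rewrite leqNgt; apply/negP => dlk.
      move: Hl; rewrite (lab_back Ec); try Lia.
      have [_ h2] := Hin (k - dl) ltac:(Lia) ltac:(Lia).
      have -> : a + k - dl = a + (k - dl) by Lia.
      Lia.
    exists (dl - k) => /=; split; first Lia.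
    rewrite modnDml.
    have -> : c + size s - dl + (dl - k) = c + size s - k by Lia.
    rewrite (back_mod Ec); try Lia.
    by rewrite addnK modn_small.
  + move=> B' HB' lvB' [d [/= dk Ed]].
    apply: Hu => //; exists (d + k); split; first Lia.
    by rewrite /c addnA -modnDml -Ed.
Qed.


Theorem lemma3 (s : seq nat) (Hs : mobile_labels s) :
  (* (i) *)
  (forall A B, is_arc s A -> is_arc s B -> A <> B ->
     ~ trivial_arc A -> ~ trivial_arc B ->
     (exists c, (internal_corner s A c /\ corner_in s B c) \/
                (internal_corner s B c /\ corner_in s A c)) ->
     (arc_sub s A B /\ level s B < level s A) \/
     (arc_sub s B A /\ level s A < level s B))
  /\
  (* (ii) *)
  ((prop_a s <-> prop_b s) /\ (prop_b s <-> prop_c s))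
  /\
  (* (iii) *)
  (prop_a s ->
   forall i, 2 <= i ->
     (forall A, is_arc s A -> level s A = i ->
        exists B, [/\ is_arc s B, level s B = i.-1, arc_sub s A B,
                      ~ trivial_arc B &
                      forall B', is_arc s B' -> level s B' = i.-1 ->
                                 arc_sub s A B' -> B' = B])
     /\
     (forall c, c < size s -> lab s c = i ->
        exists B, [/\ is_arc s B, level s B = i.-1, corner_in s B c,
                      ~ trivial_arc B &
                      forall B', is_arc s B' -> level s B' = i.-1 ->
                                 corner_in s B' c -> B' = B])).
Proof.
split.
  move=> A B HA HB ne _ _ [c [[h1 h2]|[h1 h2]]].
  - exact: (part_i_core HA HB ne h1 h2).
  - have ne' : B <> A by move=> E; apply: ne.
    by case: (part_i_core HB HA ne' h1 h2) => H; [right|left].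
split.
  split; split.
  - exact: a_to_b.
  - exact: b_to_a.
  - exact: b_to_c.
  - by move=> Hc; apply: a_to_b => //; apply: c_to_a.
move=> Ha; apply: part_iii => //.
by apply: b_to_c => //; apply: a_to_b.
Qed.
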